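(* Let $\Omega\subseteq\mathsf X$ be open, $p\in[1,\infty)$, and $\rho_\bullet=(\rho_\delta)_{\delta\in(0,1)}\subseteq\mathfrak M_+(\mathsf X\times\mathsf X)$. Suppose there is a family $(\varrho^+_\delta)_{\delta\in(0,1)}$ of Lebesgue measurable functions $(0,\infty)\to[0,+\infty]$ such that: (i) $\lim_{r\searrow0}\limsup_{\delta\searrow0}\int_{(r,+\infty)}\frac{\varrho^+_\delta(t)}{t^{p+1}}\,\mathrm dt=0$; (ii) for every $\delta\in(0,1)$, $\rho_\delta(x,x')\le\frac{\varrho^+_\delta(\mathsf d(x,x'))}{\mathfrak m(\mathrm B(x,4\mathsf d(x,x')))}$ for $(\mathfrak m\otimes\mathfrak m)$-a.e. $(x,x')\in\Omega\times\Omega$ with $x\ne x'$; (iii) there is $\bar r>0$ such that for every $\delta\in(0,1)$ and every $k\in\mathbb Z$, $\varrho^+_\delta$ is constant on $(2^k\bar r,2^{k+1}\bar r]$. Then $\rho_\bullet$ satisfies the $p$-decay condition for $\Omega$, i.e. \[ \lim_{r\searrow0}\limsup_{\delta\searrow0}\operatorname*{ess\,sup}_{x\in\Omega}\int_{\Omega\cap\{x':\mathsf d(x,x')>r\}}\frac{\rho_\delta(x,x')+\rho_\delta(x',x)}{\mathsf d(x,x')^p}\,\mathrm d\mathfrak m(x')=0. \]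
   Context: $(\mathsf X,\mathsf d)$ is a locally complete separable metric space of positive diameter with a locally finite Borel outer measure $\mathfrak m$, $\mathfrak m(\mathsf X)>0$. Conventions $0\cdot(+\infty)=0/0=0$. Closed balls $\mathrm B(x,r)=\{x':\mathsf d(x,x')\le r\}$. Essential sup w.r.t. $\mathfrak m$. $\mathfrak M_+(\mathsf X\times\mathsf X)$: $(\mathfrak m\otimes\mathfrak m)$-measurable functions into $[0,+\infty]$. *)

(* Defs.v *)
From HB Require Import structures.
From mathcomp Require Import all_boot all_order all_algebra.
From mathcomp Require Import all_classical all_reals all_analysis.
From mathcomp Require Import measurable_realfun ess_sup_inf.
Set Implicit Arguments. Unset Strict Implicit. Unset Printing Implicit Defensive.
Import Order.TTheory GRing.Theory Num.Theory.
Import numFieldNormedType.Exports.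
Local Open Scope classical_set_scope.
Local Open Scope ring_scope.

Section metric_measure.
Context {R : realType} {T : Type}.
Variable dist : T -> T -> R.

Definition is_metric :=
  [/\ forall x y, 0 <= dist x y,
      forall x y, dist x y = 0 <-> x = y,
      forall x y, dist x y = dist y x &
      forall x y z, dist x z <= dist x y + dist y z].

Definition cball (x : T) (r : R) : set T := [set y | dist x y <= r].

Definition dopen (A : set T) :=
  forall x, A x -> exists2 e : R, 0 < e & forall y, dist x y < e -> A y.

Definition separable_metric :=
  exists D : set T, countable D /\
    forall x (e : R), 0 < e -> exists2 y, D y & dist x y < e.

Definition cauchy_seq (u : nat -> T) :=
  forall e : R, 0 < e -> exists N, forall n m, (N <= n)%N -> (N <= m)%N ->
    dist (u n) (u m) < e.

Definition converges_to (u : nat -> T) (l : T) :=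
  forall e : R, 0 < e -> exists N, forall n, (N <= n)%N -> dist (u n) l < e.

Definition locally_complete :=
  forall x, exists2 r : R, 0 < r & forall u : nat -> T,
    (forall n, cball x r (u n)) -> cauchy_seq u ->
    exists2 l, cball x r l & converges_to u l.

Definition positive_diameter := exists x y : T, 0 < dist x y.
End metric_measure.

(* measurability w.r.t. the completion of mu (sigma-algebra generated by
   A u N, A measurable, N mu-negligible), on the domain D *)
Definition completed_measurable_fun {d} {T : measurableType d} {R : realType}
  (mu : set T -> \bar R) (D : set T) (f : T -> \bar R) :=
  forall B : set (\bar R), measurable B ->
    (completed_algebra_gen mu).-sigma.-measurable (D `&` f @^-1` B).

(* Main.v *)
Require Import Defs.
From HB Require Import structures.
From mathcomp Require Import all_boot all_order all_algebra.
From mathcomp Require Import all_classical all_reals all_analysis.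
From mathcomp Require Import measurable_realfun ess_sup_inf.
Import Order.TTheory GRing.Theory Num.Theory.
Import numFieldNormedType.Exports.
Local Open Scope classical_set_scope.
Local Open Scope ring_scope.

From mathcomp Require Import lra ring.
From Stdlib Require Cantor.
Local Open Scope ereal_scope.

Lemma le_integral_lower d (T : measurableType d) (R : realType)
  (mu : {measure set T -> \bar R}) (D : set T) (f g : T -> \bar R) :
  (forall x, D x -> 0 <= f x) -> (forall x, D x -> f x <= g x) ->
  \int[mu]_(x in D) f x <= \int[mu]_(x in D) g x.
Proof.
move=> f0 fg.
have g0 : forall x, D x -> 0 <= g x by move=> x Dx; exact: le_trans (f0 _ Dx) (fg _ Dx).
rewrite (ge0_integralE _ f0) (ge0_integralE _ g0).
apply: le_ereal_sup => _ [h hf <-]; exists h => //= x.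
apply: le_trans (hf x) _; rewrite /patch; case: ifPn => // /[!inE] Dx; exact: fg.
Qed.

Lemma le_integral_ae_lower d (T : measurableType d) (R : realType)
  (mu : {measure set T -> \bar R}) (D N : set T) (f g : T -> \bar R) :
  measurable D -> measurable N -> mu N = 0 -> measurable_fun D g ->
  (forall x, D x -> 0 <= f x) -> (forall x, D x -> 0 <= g x) ->
  (forall x, D x -> ~ N x -> f x <= g x) ->
  \int[mu]_(x in D) f x <= \int[mu]_(x in D) g x.
Proof.
move=> mD mN N0 mg f0 g0 fg.
pose g' x := g x + (\1_N x)%:E * +oo.
have g'0 x : D x -> 0 <= g' x.
  by move=> Dx; rewrite adde_ge0 ?g0// mule_ge0// lee_fin.
apply: (@le_trans _ _ (\int[mu]_(x in D) g' x)).
  apply: le_integral_lower => // x Dx.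
  have [Nx|Nx] := pselect (N x).
    rewrite /g' indicE mem_set// mul1e addey ?leey//; by rewrite gt_eqF // (lt_le_trans _ (g0 _ Dx)) ?ltNy0.
  by rewrite /g' indicE memNset// mul0e adde0; exact: fg.
rewrite le_eqVlt; apply/orP; left; apply/eqP.
apply: ge0_ae_eq_integral => //.
- apply: emeasurable_funD => //; apply: emeasurable_funM => //.
  apply: measurableT_comp => //; apply: measurable_funS (measurable_indic mN) => //.
- exists N; split => // x /= /not_implyP [Dx ne]; apply: contrapT => Nx; apply: ne.
  by rewrite /g' indicE memNset// mul0e adde0.
Qed.
Local Close Scope ereal_scope.

Lemma cball_measurable (R : realType) d (X : measurableType d) (dist : X -> X -> R) :
  is_metric dist -> @measurable _ X = <<s dopen dist >> ->
  forall x r, measurable (cball dist x r).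
Proof.
move=> [d0 d1 dsym dtri] HB x r.
rewrite -[cball _ _ _]setCK; apply: measurableC; rewrite HB.
apply: sub_gen_smallest => y /= ny.
have ry : r < dist x y by rewrite ltNge; apply/negP => h; apply: ny.
exists (dist x y - r); first by rewrite subr_gt0.
move=> z hz /= hxz; have := dtri x z y; rewrite (dsym z y).
rewrite /cball /= in hxz; lra.
Qed.

Lemma metric_sigma_finite (R : realType) d (X : measurableType d) (dist : X -> X -> R)
  (m : {measure set X -> \bar R}) :
  is_metric dist -> separable_metric dist ->
  (forall x r, measurable (cball dist x r)) ->
  (forall x : X, exists2 r : R, 0 < r & (m (cball dist x r) < +oo)%E) ->
  sigma_finite setT m.
Proof.
move=> [d0 d1 dsym dtri] [D [cD dD]] mB Hloc.
have [g gs] : exists g : nat -> X, set_surj setT D g by apply/pcard_surjP.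
pose B n := cball dist (g (Cantor.of_nat n).1) ((Cantor.of_nat n).2.+1%:R^-1).
pose F n := if (m (B n) < +oo)%E then B n else set0.
exists F; last first.
  move=> n; rewrite /F; case: ifPn => h; split => //; first exact: mB.
  by rewrite measure0.
apply/seteqP; split => // x _.
have [r r0 mr] := Hloc x.
pose j := Num.Def.trunc (2 / r).
have hj := truncnS_gt (2 / r); rewrite -/j in hj.
pose q : R := j.+1%:R^-1.
have q0 : 0 < q by rewrite invr_gt0.
have qr : q < r / 2.
  rewrite /q -(invrK (r / 2)) ltf_pV2 ?posrE ?invr_gt0 ?divr_gt0//.
  by rewrite invf_div.
have [y Dy dxy] := dD x q q0.
have [i _ gi] := gs y Dy.
exists (Cantor.to_nat (i, j)) => //.
have BE : B (Cantor.to_nat (i, j)) = cball dist y q.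
  by rewrite /B Cantor.cancel_of_to /= gi.
have sub : cball dist y q `<=` cball dist x r.
  move=> z; rewrite /cball /= => hz; have := dtri x y z; lra.
rewrite /F BE ifT; first by rewrite /cball /= dsym; exact: ltW.
apply: le_lt_trans mr; apply: le_measure => //; rewrite inE; exact: mB.
Qed.
Section sf.
Context (R : realType) d (X : measurableType d) (m : {measure set X -> \bar R}).
Hypothesis msf : sigma_finite setT m.
Let mm : set X -> \bar R := m.
HB.instance Definition _ := Measure.on mm.
HB.instance Definition _ := Measure_isSigmaFinite.Build _ _ _ mm msf.

Local Open Scope ereal_scope.

Lemma ae_null_section (f : X -> \bar R) : measurable_fun setT f ->
  (forall x, 0 <= f x) -> \int[m]_x f x = 0 ->
  exists M, [/\ measurable M, m M = 0 & forall x, ~ M x -> f x = 0].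
Proof.
move=> mf f0 i0.
have : \int[m]_(x in setT) `|f x| = 0.
  by rewrite -i0; apply: eq_integral => x _; rewrite gee0_abs.
move/(ae_eq_integral_abs m measurableT mf) => [M [mM M0 sub]].
exists M; split => // x Mx; apply: contrapT => fx; apply: Mx; apply: sub => /=.
by move=> /(_ I).
Qed.

Lemma null_sections (A : set (X * X)) : measurable A -> (m \x m) A = 0 ->
  \forall x \ae m, m (xsection A x) = 0 /\ m (ysection A x) = 0.
Proof.
move=> mA A0.
have [M1 [mM1 M10 H1]] := @ae_null_section (m \o xsection A)
  (measurable_fun_xsection mm mA) (fun x => measure_ge0 _ _) A0.
have A0' : \int[m]_x (m \o ysection A) x = 0.
  rewrite -(indic_fubini_tonelli_GE mm mA) -(indic_fubini_tonelli mm mm mA).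
  by rewrite (indic_fubini_tonelli_FE mm mA).
have [M2 [mM2 M20 H2]] := @ae_null_section (m \o ysection A)
  (measurable_fun_ysection mm mA) (fun x => measure_ge0 _ _) A0'.
have F1 : \forall x \ae m, m (xsection A x) = 0.
  by exists M1; split => // x /= h; apply: contrapT => Mx; apply: h; exact: H1.
have F2 : \forall x \ae m, m (ysection A x) = 0.
  by exists M2; split => // x /= h; apply: contrapT => Mx; apply: h; exact: H2.
by apply: filterS2 F1 F2 => x a b; split.
Qed.
End sf.
Lemma dyadic_log (R : realType) (b t : R) : 0 < b -> b < t ->
  exists n : nat, b * 2 ^+ n < t <= b * 2 ^+ n.+1.
Proof.
move=> b0 bt.
have ex : exists n, (t <= b * 2 ^+ n.+1) .
  exists (Num.Def.trunc (t / b)).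
  have h := truncnS_gt (t / b).
  rewrite -ler_pdivrMl // mulrC; apply: ltW; apply: (lt_le_trans h).
  rewrite -natrX ler_nat; apply: ltnW; exact: ltn_expl.
case: (ex_minnP ex) => n hn hmin; exists n; rewrite hn andbT.
case: n hn hmin => [|n] hn hmin; first by rewrite expr0 mulr1.
rewrite ltNge; apply/negP => h; have := hmin n h; by rewrite ltnn.
Qed.
Local Open Scope ereal_scope.
Lemma invmul_le1 (R : realType) (u v : \bar R) : 0 <= u -> u <= v -> v^-1 * u <= 1.
Proof.
move=> u0 uv; case: v uv => [v| |] uv; last by move: (le_trans u0 uv).
- case: u u0 uv => [u| |] u0 uv //.
  rewrite inver; case: ifPn => [/eqP v0|v0].
    rewrite v0 lee_fin in uv; rewrite lee_fin in u0.
    have -> : u = 0%R by apply/le_anti/andP.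
    by rewrite mule0.
  have -> : (v^-1)%:E * u%:E = (v^-1 * u)%:E by [].
  rewrite lee_fin; rewrite lee_fin in u0 uv.
  have vp : (0 < v)%R by rewrite lt_neqAle eq_sym v0 /= (le_trans u0 uv).
  by rewrite ler_pdivrMl // mulr1.
- by rewrite /= mul0e.
Qed.
Local Close Scope ereal_scope.

Section Jside.
Context (R : realType) d (X : measurableType d) (dist : X -> X -> R)
  (m : {measure set X -> \bar R}).
Hypothesis Hmetric : is_metric dist.
Hypothesis mB : forall x r, measurable (cball dist x r).
Variables (Omega : set X) (mO : measurable Omega) (p : R) (p0 : 0 < p).
Variables (rh : X -> X -> \bar R) (rh0 : forall x y, (0 <= rh x y)%E).
Variables (c : R -> \bar R) (c0 : forall t, 0 < t -> (0 <= c t)%E) (b : R) (b0 : 0 < b).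
Let a n := b * 2 ^+ n.
Hypothesis HC : forall n t s, a n < t <= a n * 2 -> a n < s <= a n * 2 -> c t = c s.
Variables (x : X) (r : R) (r0 : 0 < r) (br : b <= r).
Variables (N : set X) (mN : measurable N) (N0 : m N = 0).
Hypothesis Hxy : forall y, Omega y -> x <> y -> ~ N y ->
  (rh x y <= c (dist x y) / m (cball dist x (4 * dist x y)))%E /\
  (rh y x <= c (dist y x) / m (cball dist y (4 * dist y x)))%E.

Local Open Scope ereal_scope.

Let t n := if (r / 2 < a n)%R then c (a n * 2)%R * ((a n `^ p)^-1)%R%:E else 0.

Let a_gt0 n : (0 < a n)%R.
Proof. by rewrite /a mulr_gt0 // exprn_gt0. Qed.

Let t_ge0 n : 0 <= t n.
Proof.
rewrite /t; case: ifPn => // _; apply: mule_ge0; first by apply: c0; rewrite mulr_gt0.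
by rewrite lee_fin invr_ge0 powR_ge0.
Qed.

Let A n := [set y | (a n < dist x y <= a n * 2)%R].
Let Bn n := cball dist x (a n * 2).
Let e n := 2%:E * (t n * (m (Bn n))^-1).
Let term n y := (\1_(A n) y)%:E * e n.
Let G y := \sum_(0 <= n <oo) term n y.

Let mA n : measurable (A n).
Proof.
have -> : A n = Bn n `\` cball dist x (a n).
  apply/seteqP; split => y; rewrite /A /Bn /cball /=.
    by move=> /andP[h1 h2]; split => //; apply/negP; rewrite -ltNge.
  by move=> [h1 /negP]; rewrite -ltNge => h2; apply/andP.
by apply: measurableD; apply: mB.
Qed.

Let e_ge0 n : 0 <= e n.
Proof. by apply: mule_ge0 => //; apply: mule_ge0 => //; rewrite inve_ge0. Qed.

Let term_ge0 n y : 0 <= term n y.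
Proof. by apply: mule_ge0 => //; rewrite lee_fin. Qed.

Let mterm n : measurable_fun setT (term n).
Proof.
apply: emeasurable_funM => //; apply: measurableT_comp => //.
Qed.

Let mG : measurable_fun setT G.
Proof.
apply: (ge0_emeasurable_sum (P := xpredT)) => // k _; exact: mterm.
Qed.

Let G_ge0 y : 0 <= G y.
Proof. by apply: nneseries_ge0 => n _ _; exact: term_ge0. Qed.

Let intG : \int[m]_y G y <= 2%:E * \sum_(0 <= n <oo) t n.
Proof.
rewrite /G (integral_nneseries _ measurableT (fun n => mterm n) (fun n y _ => term_ge0 n y)).
rewrite -nneseriesZl //; apply: lee_nneseries => [n _ _|n _].
  by apply: integral_ge0 => y _; exact: term_ge0.
rewrite /term ge0_integralZr //; last exact: measurableT_comp.
rewrite integral_indic // setIT /e.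
rewrite muleCA; apply: lee_wpmul2l => //.
rewrite muleC -muleA; apply: le_trans (lee_wpmul2l (t_ge0 n) _) _.
  by apply: invmul_le1 => //; apply: le_measure; rewrite ?inE //; [exact: mB| move=> y /andP [] ].
by rewrite mule1.
Qed.

Let term_le_G n y : term n y <= G y.
Proof.
apply: le_trans (nneseries_lim_ge n.+1 (fun i _ _ => term_ge0 i y)).
rewrite big_nat_recr //=; apply: leeDr.
by apply: sume_ge0 => i _; exact: term_ge0.
Qed.

Let pointwise y : Omega y -> (r < dist x y)%R -> ~ N y ->
  (rh x y + rh y x) / ((dist x y `^ p)%:E) <= G y.
Proof.
move=> Oy ry Ny.
case: Hmetric => d0 d1 dsym dtri.
set dd := dist x y; rewrite -/dd in ry.
have dd0 : (0 < dd)%R by exact: lt_trans r0 ry.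
have xy : x <> y.
  by move=> exy; move: dd0; rewrite /dd exy (proj2 (d1 y y) erefl) ltxx.
have [n /andP[h1 h2]] := @dyadic_log R b dd b0 (le_lt_trans br ry).
rewrite exprSr mulrA -/(a n) in h2; rewrite -/(a n) in h1.
have [H1 H2] := Hxy y Oy xy Ny.
rewrite (dsym y x) -/dd in H2.
have an0 := a_gt0 n.
have cE : c dd = c (a n * 2)%R.
  by apply: (HC n); apply/andP; split => //; lra.
have mBn : measurable (Bn n) by exact: mB.
have mBle1 : m (Bn n) <= m (cball dist x (4 * dd)).
  apply: le_measure; rewrite ?inE //=; try exact: mB.
  by move=> z; rewrite /Bn /cball /=; lra.
have mBle2 : m (Bn n) <= m (cball dist y (4 * dd)).
  apply: le_measure; rewrite ?inE //=; try exact: mB.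
  move=> z; rewrite /Bn /cball /= => hz; have := dtri y x z.
  by rewrite (dsym y x) -/dd; lra.
have c2 : 0 <= c (a n * 2)%R by apply: c0; rewrite mulr_gt0.
have B1 : rh x y <= c (a n * 2)%R * (m (Bn n))^-1.
  apply: le_trans H1 _; rewrite cE; apply: lee_wpmul2l => //.
  by rewrite lee_pV2 // inE /= measure_ge0.
have B2 : rh y x <= c (a n * 2)%R * (m (Bn n))^-1.
  apply: le_trans H2 _; rewrite cE; apply: lee_wpmul2l => //.
  by rewrite lee_pV2 // inE /= measure_ge0.
have tE : t n = c (a n * 2)%R * ((a n `^ p)^-1)%R%:E.
  by rewrite /t ifT //; lra.
have ddp : (0 < dd `^ p)%R by apply: powR_gt0.
have P1 : ((dd `^ p)%:E)^-1 <= ((a n `^ p)^-1)%R%:E.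
  rewrite inver ifN; last by rewrite gt_eqF.
  rewrite lee_fin lef_pV2 ?posrE ?powR_gt0 //.
  by apply: ge0_ler_powR; rewrite ?nnegrE; apply: ltW.
apply: le_trans (term_le_G n y).
rewrite /term indicE mem_set /=; last by apply/andP; split => //; lra.
rewrite mul1e /e tE.
have two : (2%:E : \bar R) = 1 + 1 by rewrite -EFinD.
apply: le_trans (lee_pmul _ _ (leeD B1 B2) P1) _.
- by apply: adde_ge0.
- by rewrite inve_ge0 lee_fin powR_ge0.
have dbl (u : \bar R) : u + u = 2%:E * u by rewrite two ge0_muleDl ?mul1e.
rewrite dbl -muleA; apply: lee_wpmul2l => //.
by rewrite muleAC.
Qed.

Lemma Jbound : \int[m]_(y in Omega `&` [set y | (r < dist x y)%R])
    ((rh x y + rh y x) / ((dist x y `^ p)%:E)) <= 2%:E * \sum_(0 <= n <oo) t n.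
Proof.
have mD : measurable (Omega `&` [set y | (r < dist x y)%R]).
  apply: measurableI => //.
  have -> : [set y | (r < dist x y)%R] = ~` cball dist x r.
    by apply/seteqP; split => y; rewrite /cball /= ltNge => /negP.
  exact/measurableC/mB.
apply: le_trans intG.
apply: le_trans (ge0_subset_integral _ mD measurableT mG (fun y _ => G_ge0 y) (subsetT _)).
apply: (@le_integral_ae_lower _ _ _ m _ N) => //.
- exact: measurable_funS mG.
- move=> y _; apply: mule_ge0; first by apply: adde_ge0.
  by rewrite inve_ge0 lee_fin powR_ge0.
- by move=> y [Oy ry] Ny; apply: pointwise.
Qed.
End Jside.
Local Close Scope ereal_scope.
Section Lside.
Context (R : realType) (p : R) (p0 : 0 < p) (c : R -> \bar R)
  (c0 : forall t, 0 < t -> (0 <= c t)%E) (b : R) (b0 : 0 < b).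
Let a n := b * 2 ^+ n.
Hypothesis HC : forall n t s, a n < t <= a n * 2 -> a n < s <= a n * 2 -> c t = c s.
Variables (q : R) (q0 : 0 < q).

Local Open Scope ereal_scope.

Let t n := if (q < a n)%R then c (a n * 2)%R * ((a n `^ p)^-1)%R%:E else 0.
Let C : R := 2 `^ (p + 1).
Let w n := t n * ((C^-1 * (a n)^-1)%R)%:E.
Let Iv n : set R := `]a n, (a n * 2)%R]%classic.
Let g n s := (\1_(Iv n) s)%:E * w n.
Let h s := c s / ((s `^ (p + 1))%:E).

Let a_gt0 n : (0 < a n)%R.
Proof. by rewrite /a mulr_gt0 // exprn_gt0. Qed.

Let C_gt0 : (0 < C)%R. Proof. by rewrite powR_gt0. Qed.

Let t_ge0 n : 0 <= t n.
Proof.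
rewrite /t; case: ifPn => // _; apply: mule_ge0; first by apply: c0; rewrite mulr_gt0.
by rewrite lee_fin invr_ge0 powR_ge0.
Qed.

Let w_ge0 n : 0 <= w n.
Proof.
apply: mule_ge0 => //; rewrite lee_fin mulr_ge0 // invr_ge0 ltW //.
Qed.

Let g_ge0 n s : 0 <= g n s.
Proof. by apply: mule_ge0 => //; rewrite lee_fin. Qed.

Let mg n : measurable_fun setT (g n).
Proof. apply: emeasurable_funM => //; apply: measurableT_comp => //; apply: measurable_indic; exact: measurable_itv. Qed.

Let mq : measurable (`]q, +oo[%classic : set R). Proof. exact: measurable_itv. Qed.

Let intg n : C%:E * \int[lebesgue_measure]_(s in `]q, +oo[) g n s = t n.
Proof.
rewrite /g ge0_integralZr //; last first.
  apply: (measurable_funS measurableT) => //; apply: measurableT_comp => //.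
  apply: measurable_indic; exact: measurable_itv.
rewrite (integral_indic lebesgue_measure) //; last by rewrite /Iv; exact: measurable_itv.
rewrite /w /t; case: ifPn => qa; last by rewrite mul0e !mule0.
have -> : Iv n `&` `]q, +oo[ = Iv n.
  apply/setIidl => s; rewrite /Iv /= !in_itv /= andbT => /andP[h1 _].
  exact: lt_trans qa h1.
have LE : lebesgue_measure (Iv n) = (a n)%:E.
  rewrite /Iv lebesgue_measure_itv /= lte_fin ltr_pMr ?a_gt0 ?ltr1n //.
  by rewrite -EFinB; congr EFin; ring.
rewrite [X in C%:E * (X * _)](_ : _ = (a n)%:E); last exact: LE.
rewrite (muleCA (a n)%:E) (muleCA C%:E) -!EFinM.
have -> : (C * (a n * (C^-1 / a n)) = 1)%R.
  have an := a_gt0 n.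
  by field; apply/andP; split; rewrite gt_eqF.
by rewrite mule1.
Qed.

Let h_ge0 s : (q < s)%R -> 0 <= h s.
Proof.
move=> qs; apply: mule_ge0; first by apply: c0; exact: lt_trans q0 qs.
by rewrite inve_ge0 lee_fin powR_ge0.
Qed.

Let Iv_disj i k s : Iv i s -> Iv k s -> i = k.
Proof.
have key j l : (j < l)%N -> (a j * 2 <= a l)%R.
  move=> jl; rewrite /a -mulrA -exprSr ler_pM2l // ler_eXn2l //; exact: ltr1n.
rewrite /Iv /= !in_itv /= => /andP[h1 h2] /andP[h3 h4].
case: (ltngtP i k) => // ik.
- by have := lt_le_trans h3 (le_trans h2 (key _ _ ik)); rewrite ltxx.
- by have := lt_le_trans h1 (le_trans h4 (key _ _ ik)); rewrite ltxx.
Qed.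

Let g_le_h k s : (q < s)%R -> Iv k s -> g k s <= h s.
Proof.
move=> qs sk; rewrite /g indicE mem_set // mul1e /w /t.
case: ifPn => qa; last by rewrite mul0e; exact: h_ge0.
move: (sk); rewrite /Iv /= in_itv /= => /andP[h1 h2].
have ak := a_gt0 k.
have s0 : (0 < s)%R by exact: lt_trans ak h1.
have cE : c (a k * 2)%R = c s.
  by apply: (HC k); [apply/andP; split => //; lra | exact/andP].
rewrite cE.
rewrite /h -muleA -EFinM inver ifN; last by rewrite gt_eqF // powR_gt0.
apply: lee_wpmul2l; first exact: c0.
rewrite lee_fin.
have apk : (0 < a k `^ p)%R by rewrite powR_gt0.
have -> : ((a k `^ p)^-1 * (C^-1 / a k) = (a k `^ p * C * a k)^-1)%R.
  by field; rewrite !gt_eqF.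
rewrite lef_pV2 ?posrE ?powR_gt0 ?mulr_gt0 //.
apply: (@le_trans _ _ ((a k * 2) `^ (p + 1))%R).
  apply: ge0_ler_powR; rewrite ?nnegrE; try lra.
  by rewrite addr_ge0 // ltW.
have E : ((a k * 2) `^ (p + 1) = a k `^ p * C * a k)%R.
  rewrite powRM ?(ltW ak) // powRD; last by apply/implyP => _; rewrite gt_eqF.
  by rewrite powRr1 ?(ltW ak) // /C; ring.
by rewrite E.
Qed.

Lemma Lbound : \sum_(0 <= n <oo) t n <=
  C%:E * \int[lebesgue_measure]_(s in `]q, +oo[) h s.
Proof.
apply: lime_le; first exact: is_cvg_nneseries.
apply: nearW => K.
under eq_bigr do rewrite -intg.
rewrite -ge0_sume_distrr; last by move=> i _; apply: integral_ge0 => s _; exact: g_ge0.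
apply: lee_wpmul2l; first by rewrite lee_fin ltW.
rewrite -ge0_integral_sum //; last first.
  move=> n; apply: emeasurable_funM => //; apply/measurable_EFinP.
  by apply: measurable_indic; exact: measurable_itv.
apply: (@le_integral_lower _ _ _ lebesgue_measure) => [s _|s]; first by apply: sume_ge0 => i _; exact: g_ge0.
rewrite /= in_itv /= andbT => qs.
have [[k [kK sk]]|none] := pselect (exists k, (k < K)%N /\ Iv k s).
- rewrite (bigD1_seq k) /=; last 2 first.
  + by rewrite mem_index_iota.
  + exact: iota_uniq.
  rewrite big1_seq ?adde0; first exact: g_le_h.
  move=> i /andP[ik _]; rewrite /g indicE memNset ?mul0e //.
  by move=> si; move: ik; rewrite (Iv_disj _ _ _ si sk) eqxx.
- rewrite big1_seq; first exact: h_ge0.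
  move=> i /andP[_]; rewrite mem_index_iota => /andP[_ iK].
  rewrite /g indicE memNset ?mul0e //.
  by move=> si; apply: none; exists i.
Qed.
End Lside.
Local Close Scope ereal_scope.
Local Open Scope ereal_scope.

Lemma limf_esup_le_scale (R : realType) (F : set_system R) (f g : R -> \bar R)
  (K : R) (Q : set R) : Filter F -> (0 < K)%R -> F Q ->
  (forall x, Q x -> f x <= K%:E * g x) ->
  limf_esup f F <= K%:E * limf_esup g F.
Proof.
move=> FF K0 FQ fg; rewrite !limf_esupE -ereal_inf_pZl //.
apply/ereal_infP => _ [_ [V FV <-] <-].
apply: (@le_trans _ _ (ereal_sup (f @` (V `&` Q)))).
  by apply: ereal_inf_lbound; exists (V `&` Q) => //; exact: filterI.
rewrite -ereal_sup_pZl //; apply/ereal_supP => _ [x [Vx Qx] <-].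
apply: (le_trans (fg _ Qx)); apply: ereal_sup_ubound.
by exists (g x) => //; exists x.
Qed.

Lemma limf_esup_ge0_on (R : realType) (F : set_system R) (f : R -> \bar R)
  (Q : set R) : ProperFilter F -> F Q ->
  (forall x, Q x -> 0 <= f x) -> 0 <= limf_esup f F.
Proof.
move=> FF FQ f0; rewrite limf_esupE; apply/ereal_infP => _ [V FV <-].
have [x [Vx Qx]] := filter_ex (filterI FV FQ).
apply: le_trans (f0 _ Qx) _; apply: ereal_sup_ubound; by exists x.
Qed.

Lemma half_right (R : realType) (P : R -> Prop) :
  (\forall s \near (0:R)^'+, P s) -> \forall r \near (0:R)^'+, P (r / 2)%R.
Proof.
move=> /nbhs_ballP [e e0 H]; apply/nbhs_ballP; exists e => // r hr r0.
apply: H; last by rewrite divr_gt0.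
move: hr; rewrite /ball /= !sub0r !normrN => hr.
rewrite gtr0_norm ?divr_gt0 //; rewrite gtr0_norm // in hr; lra.
Qed.

Lemma right01 (R : realType) : \forall d \near (0:R)^'+, (0 < d < 1)%R.
Proof.
apply/nbhs_ballP; exists 1%R; first exact: ltr01.
move=> r hr r0; rewrite r0 /=.
move: hr; rewrite /ball /= sub0r normrN => hr.
by apply: le_lt_trans hr; exact: ler_norm.
Qed.
Local Close Scope ereal_scope.
Lemma HC_from (R : realType) (c : R -> \bar R) (rbar : R) (N : nat) :
  (forall (k : int) (t s : R),
       (2 ^ k) * rbar < t <= (2 ^ (k + 1)) * rbar ->
       (2 ^ k) * rbar < s <= (2 ^ (k + 1)) * rbar -> c t = c s) ->
  forall (n : nat) (t s : R),
  (fun n0 : nat => rbar / 2 ^+ N * 2 ^+ n0) n < t <= (fun n0 : nat => rbar / 2 ^+ N * 2 ^+ n0) n * 2 ->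
  (fun n0 : nat => rbar / 2 ^+ N * 2 ^+ n0) n < s <= (fun n0 : nat => rbar / 2 ^+ N * 2 ^+ n0) n * 2 ->
  c t = c s.
Proof.
move=> H n t s /= ht hs.
have two0 : (2 : R) != 0 by rewrite pnatr_eq0.
have E1 : (2 : R) ^ (n%:Z - N%:Z) * rbar = rbar / 2 ^+ N * 2 ^+ n.
  rewrite expfzDr // -exprnN -exprnP; ring.
have E2 : (2 : R) ^ (n%:Z - N%:Z + 1) * rbar = rbar / 2 ^+ N * 2 ^+ n * 2.
  by rewrite expfzDr // expr1z mulrAC E1.
by apply: (H (n%:Z - N%:Z)); rewrite E1 E2.
Qed.
Local Close Scope ereal_scope.
Theorem proposition3p14 (R : realType) (dX : measure_display)
  (X : measurableType dX) (dist : X -> X -> R)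
  (m : {measure set X -> \bar R})
  (* standing assumptions on (X, dist, m) *)
  (Hmetric : is_metric dist)
  (Hsep : separable_metric dist)
  (Hlc : locally_complete dist)
  (Hdiam : positive_diameter dist)
  (Hborel : @measurable _ X = <<s dopen dist >>)
  (Hlocfin : forall x : X, exists2 r : R, 0 < r & (m (cball dist x r) < +oo)%E)
  (HmX : (0 < m setT)%E)
  (* data *)
  (Omega : set X) (HOmega : dopen dist Omega)
  (p : R) (Hp : 1 <= p)
  (rho : R -> X -> X -> \bar R)
  (Hrho_ge0 : forall delta, 0 < delta < 1 -> forall x y, (0 <= rho delta x y)%E)
  (Hrho_meas : forall delta, 0 < delta < 1 ->
     completed_measurable_fun (m \x m)%E setT (fun z => rho delta z.1 z.2))
  (vrho : R -> R -> \bar R)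
  (Hvrho_ge0 : forall delta, 0 < delta < 1 -> forall t, 0 < t -> (0 <= vrho delta t)%E)
  (Hvrho_meas : forall delta, 0 < delta < 1 ->
     completed_measurable_fun lebesgue_measure `]0, +oo[ (vrho delta))
  (Hi : (fun r => limf_esup
          (fun delta => \int[lebesgue_measure]_(t in `]r, +oo[)
                           (vrho delta t / ((t `^ (p + 1))%:E)))%E
          (0%R^'+)) @ 0%R^'+ --> 0%E)
  (Hii : forall delta, 0 < delta < 1 ->
     (m \x m)%E.-negligible
       [set z : X * X | [/\ Omega z.1, Omega z.2, z.1 <> z.2 &
          ~ (rho delta z.1 z.2 <=
               vrho delta (dist z.1 z.2) / m (cball dist z.1 (4 * dist z.1 z.2)))%E]])
  (Hiii : exists2 rbar : R, 0 < rbar & forall delta, 0 < delta < 1 ->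
     forall (k : int) (t s : R),
       (2 ^ k) * rbar < t <= (2 ^ (k + 1)) * rbar ->
       (2 ^ k) * rbar < s <= (2 ^ (k + 1)) * rbar ->
       vrho delta t = vrho delta s) :
  (fun r : R => limf_esup
     (fun delta : R => ess_sup m (fun x =>
        if x \in Omega then
          (\int[m]_(y in Omega `&` [set y | (r < dist x y)%R])
             ((rho delta x y + rho delta y x) / ((dist x y `^ p)%:E)))%E
        else 0%E))
     (0%R^'+)) @ 0%R^'+ --> 0%E.
Proof.
have mB := @cball_measurable R _ X dist Hmetric Hborel.
have msf := @metric_sigma_finite R _ X dist m Hmetric Hsep mB Hlocfin.
have mO : measurable Omega by rewrite Hborel; exact: sub_gen_smallest.
have p0 : 0 < p by exact: lt_le_trans ltr01 Hp.
pose K : R := 2 * 2 `^ (p + 1).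
have K0 : 0 < K by rewrite mulr_gt0 // powR_gt0.
pose I delta s := (\int[lebesgue_measure]_(t in `]s, +oo[)
                           (vrho delta t / ((t `^ (p + 1))%:E)))%E.
pose F delta r := (fun x => if x \in Omega then
          (\int[m]_(y in Omega `&` [set y | (r < dist x y)%R])
             ((rho delta x y + rho delta y x) / ((dist x y `^ p)%:E)))%E
        else 0%E).
have F0 : forall delta r x, 0 < delta < 1 -> (0 <= F delta r x)%E.
  move=> delta r x hd; rewrite /F; case: ifPn => // _.
  apply: integral_ge0 => y _; apply: mule_ge0; first by apply: adde_ge0; exact: Hrho_ge0.
  by rewrite inve_ge0 lee_fin powR_ge0.
have claim : forall delta r, 0 < delta < 1 -> 0 < r ->
    (ess_sup m (F delta r) <= K%:E * I delta (r / 2)%R)%E.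
  move=> delta r hd r0.
  have [rbar rbar0 Hrb] := Hiii.
  have [N bN] : exists N : nat, rbar / 2 ^+ N <= r.
    exists (Num.Def.trunc (rbar / r)).
    have h := truncnS_gt (rbar / r).
    rewrite ler_pdivrMr ?exprn_gt0 //.
    rewrite ltr_pdivrMr // in h; apply: ltW; apply: (lt_le_trans h).
    rewrite mulrC ler_pM2l // -natrX ler_nat; exact: ltn_expl.
  pose b := rbar / 2 ^+ N.
  have b0 : 0 < b by rewrite divr_gt0 // exprn_gt0.
  have HC := @HC_from R (vrho delta) rbar N (Hrb delta hd).
  have [A [mA A0 SA]] := Hii delta hd.
  have hae := @null_sections R _ X m msf A mA A0.
  have I0 : (0 <= I delta (r / 2)%R)%E.
    apply: integral_ge0 => t; rewrite /= in_itv /= andbT => ht.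
    apply: mule_ge0; first by apply: Hvrho_ge0 => //; apply: lt_trans ht; rewrite divr_gt0.
    by rewrite inve_ge0 lee_fin powR_ge0.
  apply/ess_supP; apply: filterS hae => x [hx1 hx2].
  rewrite /F; case: ifPn => [/[!inE] Ox|_]; last by apply: mule_ge0 => //; rewrite lee_fin ltW.
  pose Nx := xsection A x `|` ysection A x.
  have mNx : measurable Nx by apply: measurableU; [exact: measurable_xsection|exact: measurable_ysection].
  have Nx0 : m Nx = 0%E.
    apply/eqP; rewrite eq_le measure_ge0 andbT.
    apply: le_trans (measureU2 m (measurable_xsection x mA) (measurable_ysection x mA)) _.
    rewrite [X in (X + _)%E](_ : _ = 0%E); last exact: hx1.
    rewrite [X in (_ + X)%E](_ : _ = 0%E); last exact: hx2.
    by rewrite adde0.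
  have Hxy : forall y, Omega y -> x <> y -> ~ Nx y ->
    (rho delta x y <= vrho delta (dist x y) / m (cball dist x (4 * dist x y)))%E /\ (rho delta y x <= vrho delta (dist y x) / m (cball dist y (4 * dist y x)))%E.
    move=> y Oy xy Ny; split; apply: contrapT => H; apply: Ny.
      by left; rewrite /xsection /= inE; apply: SA; split.
    by right; rewrite /ysection /= inE; apply: SA; split => //= yx; apply: xy.
  apply: le_trans (@Jbound R _ X dist m Hmetric mB Omega mO p p0 (rho delta)
     (Hrho_ge0 delta hd) (vrho delta) (Hvrho_ge0 delta hd)
     b b0 HC x r r0 bN Nx mNx Nx0 Hxy) _.
  have L := @Lbound R p p0 (vrho delta) (Hvrho_ge0 delta hd) b b0 HC (r / 2)%R
     (divr_gt0 r0 (ltr0n _ 2)).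
  apply: le_trans (lee_wpmul2l _ L) _; first by rewrite lee_fin.
  by rewrite muleA -EFinM.
pose Phi := fun r => limf_esup (fun delta => ess_sup m (F delta r)) 0%R^'+.
pose Hh := fun r => (K%:E * limf_esup (fun delta => I delta (r / 2)%R) 0%R^'+)%E.
have bnd : \forall r \near 0%R^'+, (cst 0%E r <= Phi r <= Hh r)%E.
  apply: filterS (nbhs_right_gt 0%R) => r r0.
  apply/andP; split.
    apply: (@limf_esup_ge0_on _ _ _ [set delta | 0 < delta < 1]); first exact: right01.
    move=> delta hd; apply: ess_sup_gee => //; apply: nearW => x; exact: F0.
  apply: (@limf_esup_le_scale _ _ _ _ K [set delta | 0 < delta < 1]) => //; first exact: right01.
  by move=> delta hd; exact: claim.
have h0 : Hh r @[r --> 0%R^'+] --> 0%E.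
  have Hi' : (fun r => limf_esup (fun delta => I delta (r / 2)%R) 0%R^'+) @ 0%R^'+ --> 0%E.
    move=> U hU.
    apply: (@half_right R (fun s => U (limf_esup (fun delta => I delta s) 0%R^'+))).
    exact: (Hi U hU).
  have := @cvgeZl _ _ _ _ _ K%:E (fin_numE _) Hi'.
  by rewrite mule0.
have := @squeeze_cvge R (0%R^'+) _ R (cst 0%E) Phi Hh bnd 0%E (cvg_cst _) h0.
exact.
Qed.
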